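(* Let $f$ be a rotational wave with speed $c$ satisfying $c^2>1$. Then there exists $\lambda_*\in\sigma(\mathrm{P})$ with $\operatorname{Re}\lambda_*>0$.
   Context: A traveling wave of speed $c$ ($c^2\neq1$) of $u_{tt}-u_{xx}+\sin u=0$ is a real solution $f$ of $(c^2-1)f''+\sin f=0$, with energy $E$ given by $\tfrac12(c^2-1)(f')^2+1-\cos f=E$; when $c^2>1$ it is rotational if $E>2$. Let $\gamma=1/(c^2-1)$. $\sigma(\mathrm{P})$ is the set of $\lambda\in\mathbb{C}$ for which $p''-2c\gamma\lambda p'+\gamma(\lambda^2+\cos f(z))p=0$ has a nontrivial solution bounded on $\mathbb{R}$. *)

(* Defs.v *)
From Stdlib Require Import Reals.
From Coquelicot Require Import Coquelicot.
Open Scope R_scope.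

(* f is a (real, C^2) traveling wave of speed c of u_tt - u_xx + sin u = 0:
   (c^2-1) f'' + sin f = 0 on all of R. *)
Definition traveling_wave (c : R) (f : R -> R) : Prop :=
  (forall z, ex_derive f z) /\ (forall z, ex_derive (Derive f) z) /\
  (forall z, (c ^ 2 - 1) * Derive_n f 2 z + sin (f z) = 0).

Definition wave_energy (c : R) (f : R -> R) (E : R) : Prop :=
  forall z, / 2 * (c ^ 2 - 1) * (Derive f z) ^ 2 + 1 - cos (f z) = E.

Definition rotational_wave (c : R) (f : R -> R) : Prop :=
  traveling_wave c f /\ exists E, wave_energy c f E /\ 2 < E.

Definition gamma (c : R) : R := / (c ^ 2 - 1).

Definition in_sigma_P (c : R) (f : R -> R) (lam : C) : Prop :=
  exists (p dp ddp : R -> C),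
    (forall z, is_derive p z (dp z)) /\
    (forall z, is_derive dp z (ddp z)) /\
    (forall z, (ddp z - 2 * RtoC c * RtoC (gamma c) * lam * dp z
                + RtoC (gamma c) * (lam * lam + RtoC (cos (f z))) * p z)%C = 0%C) /\
    (exists M : R, forall z, Cmod (p z) <= M) /\
    (exists z, p z <> 0%C).

(* Main.v *)
Require Import Defs.
From Stdlib Require Import Reals.
From Coquelicot Require Import Coquelicot.
Open Scope R_scope.
From Stdlib Require Import Lra.

Open Scope R_scope.

Definition Csr (x y : R) := sqrt ((sqrt (x*x + y*y) + x)/2).
Definition Csi (x y : R) := sqrt ((sqrt (x*x + y*y) - x)/2).

Lemma sqrt_ge_abs x y : Rabs x <= sqrt (x*x + y*y).
Proof.
  rewrite <- sqrt_Rsqr_abs. apply sqrt_le_1_alt. unfold Rsqr. nra.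
Qed.

Lemma Csq_prop x y : 0 <= y ->
  Csr x y * Csr x y - Csi x y * Csi x y = x /\ 2 * Csr x y * Csi x y = y.
Proof.
  intros Hy. unfold Csr, Csi.
  set (r := sqrt (x*x+y*y)).
  assert (Hr : Rabs x <= r) by apply sqrt_ge_abs.
  assert (Hr2 : r * r = x*x + y*y) by (apply sqrt_sqrt; nra).
  assert (H1 : 0 <= (r + x)/2) by (pose proof (Rle_abs (-x)); rewrite Rabs_Ropp in *; lra).
  assert (H2 : 0 <= (r - x)/2) by (pose proof (Rle_abs x); lra).
  rewrite !sqrt_sqrt by assumption. split; [lra|].
  rewrite Rmult_assoc, <- sqrt_mult by assumption.
  replace ((r + x) / 2 * ((r - x) / 2)) with ((y/2)*(y/2)) by nra.
  rewrite sqrt_square by lra. lra.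
Qed.

Lemma Csr_pos x y : 0 < y \/ 0 < x -> 0 < Csr x y.
Proof.
  intros H. unfold Csr. apply sqrt_lt_R0.
  assert (Hr : Rabs x <= sqrt (x*x+y*y)) by apply sqrt_ge_abs.
  destruct H as [H|H].
  - assert (Rabs x < sqrt (x*x+y*y)).
    { rewrite <- sqrt_Rsqr_abs. apply sqrt_lt_1_alt. unfold Rsqr. split; nra. }
    pose proof (Rle_abs (-x)); rewrite Rabs_Ropp in *; lra.
  - pose proof (Rle_abs x). lra.
Qed.

Lemma Csi_pos x y : 0 < y -> 0 < Csi x y.
Proof.
  intros H. unfold Csi. apply sqrt_lt_R0.
  assert (Rabs x < sqrt (x*x+y*y)).
  { rewrite <- sqrt_Rsqr_abs. apply sqrt_lt_1_alt. unfold Rsqr. split; nra. }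
  pose proof (Rle_abs x); lra.
Qed.

Lemma cR_mul (f g : R -> R) x : continuous f x -> continuous g x -> continuous (fun t => f t * g t) x.
Proof. intros; apply (@continuous_mult R_UniformSpace R_AbsRing f g x); auto. Qed.
Lemma cR_plus (f g : R -> R) x : continuous f x -> continuous g x -> continuous (fun t => f t + g t) x.
Proof. intros; apply (@continuous_plus R_UniformSpace R_AbsRing R_NormedModule f g x); auto. Qed.
Lemma cR_minus (f g : R -> R) x : continuous f x -> continuous g x -> continuous (fun t => f t - g t) x.
Proof. intros; apply (@continuous_minus R_UniformSpace R_AbsRing R_NormedModule f g x); auto. Qed.
Lemma cR_const (k : R) x : continuous (fun _ : R => k) x.
Proof. apply continuous_const. Qed.
Lemma cR_id x : continuous (fun t : R => t) x.
Proof. apply continuous_id. Qed.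

Lemma cont_Csr (X Y : R -> R) t : continuous X t -> continuous Y t -> continuous (fun t => Csr (X t) (Y t)) t.
Proof.
  intros HX HY. unfold Csr. apply continuous_sqrt_comp.
  unfold Rdiv. apply cR_mul; [|apply cR_const].
  apply cR_plus; auto. apply continuous_sqrt_comp.
  apply cR_plus; apply cR_mul; auto.
Qed.

Lemma cont_Csi (X Y : R -> R) t : continuous X t -> continuous Y t -> continuous (fun t => Csi (X t) (Y t)) t.
Proof.
  intros HX HY. unfold Csi. apply continuous_sqrt_comp.
  unfold Rdiv. apply cR_mul; [|apply cR_const].
  apply cR_minus; auto. apply continuous_sqrt_comp.
  apply cR_plus; apply cR_mul; auto.
Qed.
Lemma c2_t (f : R -> R) u t : continuous f t -> continuity_2d_pt (fun _ v => f v) u t.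
Proof.
  intros H. apply (continuity_1d_2d_pt_comp f (fun _ v => v)).
  apply continuity_pt_filterlim; exact H. apply continuity_2d_pt_id2.
Qed.
Lemma c2_u (f : R -> R) u t : continuous f u -> continuity_2d_pt (fun v _ => f v) u t.
Proof.
  intros H. apply (continuity_1d_2d_pt_comp f (fun v _ => v)).
  apply continuity_pt_filterlim; exact H. apply continuity_2d_pt_id1.
Qed.

Lemma cont2_gen (L1 L2 L3 L4 L5 : R -> R) (P Q : R -> R) c0 u0 t0 :
  continuous L1 t0 -> continuous L2 t0 -> continuous L3 t0 -> continuous L4 t0 -> continuous L5 t0 ->
  continuous P u0 -> continuous Q u0 -> Q u0 <> 0 ->
  (L4 t0 + P u0) * (L4 t0 + P u0) + L5 t0 * L5 t0 <> 0 ->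
  continuity_2d_pt (fun u t => (L1 t * c0 - (L2 t * (L4 t + P u) + L3 t * L5 t) *
       / ((L4 t + P u) * (L4 t + P u) + L5 t * L5 t)) * / Q u) u0 t0.
Proof.
  intros H1 H2 H3 H4 H5 HP HQ HQ0 HD.
  apply continuity_2d_pt_mult.
  - apply continuity_2d_pt_minus.
    + apply continuity_2d_pt_mult. now apply c2_t. apply continuity_2d_pt_const.
    + apply continuity_2d_pt_mult.
      * apply continuity_2d_pt_plus; apply continuity_2d_pt_mult; try (now apply c2_t).
        apply continuity_2d_pt_plus. now apply c2_t. now apply c2_u.
      * apply continuity_2d_pt_inv; [|exact HD].
        apply continuity_2d_pt_plus; apply continuity_2d_pt_mult; try (now apply c2_t);
        apply continuity_2d_pt_plus; try (now apply c2_t); now apply c2_u.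
  - apply continuity_2d_pt_inv; [|exact HQ0]. now apply c2_u.
Qed.
Lemma c2_cont_u (F : R -> R -> R) u t : continuity_2d_pt F u t -> continuous (fun u => F u t) u.
Proof.
  intros H. apply continuity_pt_filterlim.
  intros eps Heps. destruct (H (mkposreal eps Heps)) as [d Hd].
  exists d; split; [apply cond_pos|]. intros x [_ Hx].
  unfold R_dist in *. simpl in *. apply Hd. auto. rewrite Rminus_eq_0, Rabs_R0; apply cond_pos.
Qed.

Lemma cont_param_int (F : R -> R -> R) a b t0 : a < b -> (forall u t, continuity_2d_pt F u t) ->
  continuity_pt (fun t => RInt (fun u => F u t) a b) t0.
Proof.
  intros Hab HF eps Heps.
  set (e' := eps / (2 * (b - a))).
  assert (He' : 0 < e') by (unfold e'; apply Rdiv_lt_0_compat; lra).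
  destruct (uniform_continuity_2d_1d F a b t0 (fun x _ => HF x t0) (mkposreal e' He')) as [d Hd].
  exists d; split; [apply cond_pos|].
  intros t [_ Ht]. unfold R_dist, Rdist in *; simpl in *.
  assert (Hex : forall t, ex_RInt (fun u => F u t) a b).
  { intros t1. apply (ex_RInt_continuous (V := R_CompleteNormedModule)). intros z _. apply c2_cont_u, HF. }
  assert (E := RInt_minus (V:=R_CompleteNormedModule) (fun u => F u t) (fun u => F u t0) a b (Hex t) (Hex t0)).
  unfold minus, plus, opp in E; simpl in E. unfold Rdist, Rminus. rewrite <- E.
  apply Rle_lt_trans with ((b - a) * e').
  - apply abs_RInt_le_const. lra.
    apply (ex_RInt_minus (V := R_CompleteNormedModule) (fun u => F u t) (fun u => F u t0)); auto.
    intros u Hu. apply Rlt_le.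
    pose proof (cond_pos d). unfold Rdist in Ht.
    apply (Hd u t0 u t); try lra.
    + split; pose proof (Rle_abs (t - t0)); pose proof (Rle_abs (-(t - t0))); rewrite Rabs_Ropp in *; lra.
    + replace (u - u) with 0 by ring. rewrite Rabs_R0; lra.
  - unfold e'. field_simplify; lra.
Qed.
Lemma exRc (f : R -> R) a b : (forall y, continuous f y) -> ex_RInt f a b.
Proof. intros H. apply (ex_RInt_continuous (V := R_CompleteNormedModule)). intros; apply H. Qed.

Lemma RInt_ch (f : R -> R) a b c : (forall y, continuous f y) -> RInt f a b + RInt f b c = RInt f a c.
Proof. intros H. apply (RInt_Chasles (V := R_CompleteNormedModule)); apply exRc; auto. Qed.

Lemma RInt_shift (f : R -> R) a b T : (forall y, continuous f y) ->
  RInt (fun y => f (y + T)) a b = RInt f (a + T) (b + T).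
Proof.
  intros H.
  rewrite <- (Rmult_1_l a) at 2. rewrite <- (Rmult_1_l b) at 2.
  rewrite <- (RInt_comp_lin (V := R_CompleteNormedModule) f 1 T a b).
  - apply RInt_ext. intros x _. unfold scal; simpl; unfold mult; simpl. replace (1*x+T) with (x+T) by ring. ring.
  - apply exRc; auto.
Qed.

Lemma RInt_period (f : R -> R) T x : (forall y, continuous f y) -> (forall y, f (y + T) = f y) ->
  RInt f x (x + T) = RInt f 0 T.
Proof.
  intros H Hp.
  rewrite <- (RInt_ch f x T (x + T)) by auto.
  rewrite <- (RInt_ch f x 0 T) by auto.
  replace (RInt f T (x + T)) with (RInt f 0 x).
  - pose proof (RInt_ch f x 0 x H) as E. rewrite RInt_point in E. unfold zero in E; simpl in E.
    lra.
  - replace T with (0 + T) at 1 by ring. rewrite <- RInt_shift by auto.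
    apply RInt_ext. intros; rewrite Hp; reflexivity.
Qed.

Definition Wf g A u := sqrt (2*g*(A + cos u)).
Definition lrp g A M b t := Csr ((t*M - A)/(2*g)) (b*(1-t)/(2*g)).
Definition lip g A M b t := Csi ((t*M - A)/(2*g)) (b*(1-t)/(2*g)).
Definition s1r M b t := Csr (t*M-1) (b*(1-t)).
Definition s1i M b t := Csi (t*M-1) (b*(1-t)).
Definition s2r M b t := Csr (t*M+1) (b*(1-t)).
Definition s2i M b t := Csi (t*M+1) (b*(1-t)).
Definition srp M b t := s1r M b t * s2r M b t - s1i M b t * s2i M b t.
Definition sip M b t := s1r M b t * s2i M b t + s1i M b t * s2r M b t.
Definition mrp g A M b t := lrp g A M b t * srp M b t - lip g A M b t * sip M b t.
Definition mip g A M b t := lrp g A M b t * sip M b t + lip g A M b t * srp M b t.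
Definition FF c0 g A M b u t :=
  (lrp g A M b t * c0 - (mrp g A M b t * (t*M + cos u) + mip g A M b t * (b*(1-t))) *
    / ((t*M + cos u)*(t*M + cos u) + (b*(1-t))*(b*(1-t)))) * / Wf g A u.

Lemma Csr_y0 x : 0 <= x -> Csr x 0 = sqrt x.
Proof. intros H. unfold Csr. replace (x*x+0*0) with (x*x) by ring. rewrite sqrt_square by auto. f_equal; field. Qed.
Lemma Csi_y0 x : 0 <= x -> Csi x 0 = 0.
Proof. intros H. unfold Csi. replace (x*x+0*0) with (x*x) by ring. rewrite sqrt_square by auto.
  replace ((x - x)/2) with 0 by field. apply sqrt_0. Qed.

Lemma Wf_pos g A u : 0 < g -> 1 < A -> 0 < Wf g A u.
Proof. intros. unfold Wf. apply sqrt_lt_R0. pose proof (COS_bound u). nra. Qed.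

Lemma cont_Wf g A u : 0 < g -> 1 < A -> continuous (Wf g A) u.
Proof.
  intros. unfold Wf. apply continuous_sqrt_comp. apply cR_mul. apply cR_const.
  apply cR_plus. apply cR_const. apply continuous_cos.
Qed.

Lemma FF_cont2 c0 g A M b u t : 0 < g -> 1 < A -> 0 < b -> 2 < M ->
  continuity_2d_pt (FF c0 g A M b) u t.
Proof.
  intros Hg HA Hb HM. unfold FF.
  assert (CX : forall k1 k2 k3, continuous (fun t => (t*k1 - k2)/k3) t).
  { intros. unfold Rdiv. apply cR_mul; [|apply cR_const]. apply cR_minus; [|apply cR_const]. apply cR_mul; [apply cR_id|apply cR_const]. }
  assert (CY : forall k1 k2, continuous (fun t => k1*(1-t)/k2) t).
  { intros. unfold Rdiv. apply cR_mul; [|apply cR_const]. apply cR_mul; [apply cR_const|]. apply cR_minus; [apply cR_const|apply cR_id]. }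
  assert (CY' : forall k1, continuous (fun t => k1*(1-t)) t).
  { intros. apply cR_mul; [apply cR_const|]. apply cR_minus; [apply cR_const|apply cR_id]. }
  assert (CS : forall k, continuous (fun t => t*M + k) t).
  { intros. apply cR_plus; [|apply cR_const]. apply cR_mul; [apply cR_id|apply cR_const]. }
  assert (CS' : forall k, continuous (fun t => t*M - k) t).
  { intros. apply cR_minus; [|apply cR_const]. apply cR_mul; [apply cR_id|apply cR_const]. }
  assert (Cl : continuous (lrp g A M b) t) by (apply cont_Csr; auto).
  assert (Cli : continuous (lip g A M b) t) by (apply cont_Csi; auto).
  assert (C1 : continuous (s1r M b) t) by (apply cont_Csr; auto).
  assert (C2 : continuous (s1i M b) t) by (apply cont_Csi; auto).
  assert (C3 : continuous (s2r M b) t) by (apply cont_Csr; auto).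
  assert (C4 : continuous (s2i M b) t) by (apply cont_Csi; auto).
  assert (Csr' : continuous (srp M b) t) by (apply cR_minus; apply cR_mul; auto).
  assert (Csi' : continuous (sip M b) t) by (apply cR_plus; apply cR_mul; auto).
  apply (cont2_gen (lrp g A M b) (mrp g A M b) (mip g A M b) (fun t => t*M) (fun t => b*(1-t)) cos (Wf g A)).
  - exact Cl.
  - apply cR_minus; apply cR_mul; auto.
  - apply cR_plus; apply cR_mul; auto.
  - apply cR_mul; [apply cR_id|apply cR_const].
  - apply CY'.
  - apply continuous_cos.
  - apply cont_Wf; auto.
  - apply Rgt_not_eq, Wf_pos; auto.
  - destruct (Req_dec t 1) as [->|Ht].
    + destruct (COS_bound u). apply Rgt_not_eq. replace (b*(1-1)) with 0 by ring. assert (1 < 1*M + cos u) by lra. nra.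
    + assert (Hy : b*(1-t) <> 0). { apply Rmult_integral_contrapositive; split; lra. }
      apply Rgt_not_eq. pose proof (Rsqr_pos_lt _ Hy). unfold Rsqr in *. pose proof (Rle_0_sqr (t*M + cos u)). unfold Rsqr in *. lra.
Qed.
Lemma FF_t1_pos c0 g A M b u : 0 < g -> 1 < A -> 0 < c0 -> c0 * c0 = 1 + / g -> M = A + 1 + 2*g -> 0 < b ->
  0 < FF c0 g A M b u 1.
Proof.
  intros Hg HA Hc Hc2 HM Hb.
  destruct (COS_bound u) as [Cu1 Cu2].
  unfold FF, mrp, mip, lrp, lip, srp, sip, s1r, s1i, s2r, s2i.
  replace (b*(1-1)) with 0 by ring. replace (0/(2*g)) with 0 by (field; lra).
  set (X := (1*M - A)/(2*g)).
  assert (HX : 0 < X) by (unfold X; apply Rdiv_lt_0_compat; lra).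
  rewrite !Csr_y0, !Csi_y0 by lra.
  set (sX := sqrt X). set (p := sqrt (1*M-1)). set (q := sqrt (1*M+1)).
  assert (HsX : 0 < sX) by (apply sqrt_lt_R0; lra).
  assert (Hp : 0 < p) by (apply sqrt_lt_R0; lra).
  assert (Hq : 0 < q) by (apply sqrt_lt_R0; lra).
  assert (Hp2 : p * p = 1*M - 1) by (apply sqrt_sqrt; lra).
  assert (Hq2 : q * q = 1*M + 1) by (apply sqrt_sqrt; lra).
  set (Y := 1*M + cos u).
  assert (HY : M - 1 <= Y) by (unfold Y; lra).
  assert (HW := Wf_pos g A u Hg HA).
  apply Rmult_lt_0_compat; [|apply Rinv_0_lt_compat; exact HW].
  replace ((sX * (p * q - 0 * 0) - 0 * (p * 0 + 0 * q)) * Y + (sX * (p * 0 + 0 * q) + 0 * (p * q - 0 * 0)) * 0)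
    with (sX * (p*q) * Y) by ring.
  replace (Y * Y + 0 * 0) with (Y*Y) by ring.
  assert (HY0 : 0 < Y) by lra.
  replace (sX * c0 - sX * (p * q) * Y * / (Y * Y)) with (sX * (c0 - p*q / Y)) by (field; lra).
  apply Rmult_lt_0_compat; auto.
  apply Rlt_Rminus. apply (Rmult_lt_reg_r Y); [lra|]. unfold Rdiv. rewrite Rmult_assoc, Rinv_l, Rmult_1_r by lra.
  assert (Hpq : 0 < p*q) by nra.
  apply Rsqr_incrst_0; try nra. unfold Rsqr.
  replace (p*q*(p*q)) with ((p*p)*(q*q)) by ring. rewrite Hp2, Hq2.
  replace (c0 * Y * (c0 * Y)) with ((c0*c0)*(Y*Y)) by ring. rewrite Hc2.
  assert (Hginv : 0 < / g) by (apply Rinv_0_lt_compat; lra).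
  assert (E : (1 + /g) * (Y*Y) >= (1 + /g) * ((M-1)*(M-1))) by (apply Rle_ge, Rmult_le_compat_l; nra).
  assert (E2 : (1 + /g) * ((M-1)*(M-1)) > (M+1)*(M-1)).
  { assert (/g * (M-1) > 2). { rewrite HM. replace (A+1+2*g-1) with (A + 2*g) by ring.
      rewrite Rmult_plus_distr_l. replace (/g*(2*g)) with 2 by (field; lra). assert (0 < /g * A) by nra. lra. }
    nra. }
  nra.
Qed.
Lemma pair_ineq x y R b c0 g A C W1 W2 : 0 < g -> 1 < A -> 0 < c0 -> c0 * b = 1 -> 0 < b ->
  R * R = 1 + b * b -> 0 < R -> 0 < x -> 0 < y -> x*x - y*y = - A / (2*g) -> 2*x*y = b / (2*g) ->
  -1 <= C <= 1 -> W1 * W1 = 2*g*(A+C) -> W2 * W2 = 2*g*(A-C) -> 0 < W1 -> 0 < W2 ->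
  (x * c0 - (-(y*R) * C + x*R*b) * / (C*C + b*b)) * / W1 +
  (x * c0 - (-(y*R) * (-C) + x*R*b) * / ((-C)*(-C) + b*b)) * / W2 < 0.
Proof.
  intros Hg HA Hc Hcb Hb HR HR0 Hx Hy HX HY HC HW1 HW2 HW1p HW2p.
  set (D := C*C + b*b).
  assert (HD : 0 < D) by (unfold D; nra).
  replace ((-C)*(-C) + b*b) with D by (unfold D; ring).
  set (T1 := x * (c0 * D - R * b)). set (Q := y * R * C).
  assert (Hr1 : 1 < R) by nra.
  assert (Hkey : (T1 + Q) * W2 + (T1 - Q) * W1 < 0).
  { set (S := (W1 + W2) * (W1 + W2)).
    assert (HS0 : 0 < S) by (unfold S; nra).
    assert (HS1 : S <= 8 * g * A) by (unfold S; nra).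
    assert (HT1 : T1 <= x * c0 * (C*C)).
    { unfold T1, D. assert (c0 * (C*C+b*b) - R*b = c0*(C*C) + b*(1 - R)) by (replace (c0*(C*C+b*b)) with (c0*(C*C) + (c0*b)*b) by ring; rewrite Hcb; ring). rewrite H. assert (b*(1-R) < 0) by nra. assert (x*(b*(1-R)) < 0) by nra. nra. }
    assert (Hmain : T1 * S - 4*g*y*R*(C*C) < 0).
    { destruct (Rle_lt_dec T1 0) as [Hneg|Hpos].
      - destruct (Req_dec C 0) as [->|HC0].
        + assert (T1 < 0). { unfold T1, D. replace (c0*(0*0+b*b) - R*b) with (b*(1-R)) by (replace (c0*(0*0+b*b)) with ((c0*b)*b) by ring; rewrite Hcb; ring). assert (b*(1-R) < 0) by nra. nra. }
          assert (0 < (-T1)*S) by (apply Rmult_lt_0_compat; lra). replace (0*0) with 0 by ring. lra.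
        + assert (0 < C*C) by (apply Rsqr_pos_lt in HC0; unfold Rsqr in HC0; lra).
          assert (0 < 4*g*y*R*(C*C)) by (apply Rmult_lt_0_compat; [|lra]; repeat apply Rmult_lt_0_compat; lra).
          assert (0 <= (-T1)*S) by (apply Rmult_le_pos; lra). lra.
      - assert (HCC : 0 < C*C).
        { unfold T1, D in Hpos. assert (c0*(C*C+b*b) - R*b = c0*(C*C) + b*(1 - R)) by (replace (c0*(C*C+b*b)) with (c0*(C*C) + (c0*b)*b) by ring; rewrite Hcb; ring).
          rewrite H in Hpos. destruct (Rle_lt_dec (C*C) 0) as [Hle|]; [|lra]. assert (HC2 : C*C = 0) by nra. rewrite HC2 in Hpos. assert (b*(1-R) < 0) by nra. assert (x*(b*(1-R)) < 0) by nra. lra. }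
        assert (Hxy : 2 * A * x * c0 < R * y).
        { assert (E1 : 2*A*x*c0*y = A/(2*g)).
          { replace (2*A*x*c0*y) with (A*c0*(2*x*y)) by ring. rewrite HY. replace (A*c0*(b/(2*g))) with (A*(c0*b)/(2*g)) by (field; lra).
            rewrite Hcb. field. lra. }
          assert (E2 : A/(2*g) < y*y).
          { assert (y*y = x*x + A/(2*g)) by (unfold Rdiv in *; lra). nra. }
          assert (2*A*x*c0*y < R*y*y) by nra.
          apply (Rmult_lt_reg_r y); nra. }
        assert (T1 * S <= x*c0*(C*C) * (8*g*A)).
        { apply Rle_trans with (x*c0*(C*C)*S). apply Rmult_le_compat_r; lra.
          apply Rmult_le_compat_l; [|lra]. assert (0 < x*c0) by nra. nra. }
        assert (x*c0*(C*C)*(8*g*A) = 4*g*(C*C)*(2*A*x*c0)) by ring.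
        assert (4*g*(C*C)*(2*A*x*c0) < 4*g*(C*C)*(R*y)).
        { apply Rmult_lt_compat_l; [|exact Hxy]. nra. }
        nra. }
    assert (E : ((T1 + Q) * W2 + (T1 - Q) * W1) * (W1 + W2) = T1 * S - 4*g*y*R*(C*C)).
    { unfold S, Q. replace (((T1 + y*R*C) * W2 + (T1 - y*R*C) * W1) * (W1 + W2))
        with (T1 * ((W1+W2)*(W1+W2)) - y*R*C*(W1*W1 - W2*W2)) by ring.
      rewrite HW1, HW2. ring. }
    assert (0 < W1 + W2) by lra.
    destruct (Rle_lt_dec 0 ((T1 + Q) * W2 + (T1 - Q) * W1)); [|lra].
    assert (0 <= ((T1 + Q) * W2 + (T1 - Q) * W1) * (W1 + W2)) by nra. lra. }
  replace ((x * c0 - (- (y * R) * C + x * R * b) * / D) * / W1 +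
           (x * c0 - (- (y * R) * - C + x * R * b) * / D) * / W2)
    with (((T1 + Q) * W2 + (T1 - Q) * W1) * / (D * W1 * W2)).
  - assert (0 < / (D * W1 * W2)) by (apply Rinv_0_lt_compat; repeat apply Rmult_lt_0_compat; lra).
    nra.
  - unfold T1, Q. field. repeat split; lra.
Qed.

Lemma FF_t0_neg c0 g A M b u : 0 < g -> 1 < A -> 0 < c0 -> c0 * b = 1 -> 0 < b ->
  FF c0 g A M b u 0 + FF c0 g A M b (u + PI) 0 < 0.
Proof.
  intros Hg HA Hc Hcb Hb.
  unfold FF, mrp, mip, lrp, lip, srp, sip, s1r, s1i, s2r, s2i.
  replace (0*M - A) with (-A) by ring. replace (b*(1-0)) with b by ring.
  replace (0*M-1) with (-1) by ring. replace (0*M+1) with 1 by ring. replace (0*M) with 0 by ring.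
  rewrite neg_cos. rewrite !Rplus_0_l.
  set (X := -A/(2*g)). set (Y := b/(2*g)).
  assert (HY : 0 < Y) by (unfold Y; apply Rdiv_lt_0_compat; lra).
  destruct (Csq_prop X Y (Rlt_le _ _ HY)) as [Q1 Q2].
  assert (Hx := Csr_pos X Y (or_introl HY)). assert (Hy := Csi_pos X Y HY).
  set (x := Csr X Y) in *. set (y := Csi X Y) in *.
  destruct (Csq_prop (-1) b (Rlt_le _ _ Hb)) as [P1 P2].
  destruct (Csq_prop 1 b (Rlt_le _ _ Hb)) as [P3 P4].
  assert (Hp1 := Csr_pos (-1) b (or_introl Hb)). assert (Hq1 := Csi_pos (-1) b Hb).
  assert (Hp2 := Csr_pos 1 b (or_introl Hb)). assert (Hq2 := Csi_pos 1 b Hb).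
  set (p1 := Csr (-1) b) in *. set (q1 := Csi (-1) b) in *.
  set (p2 := Csr 1 b) in *. set (q2 := Csi 1 b) in *.
  set (sr := p1 * p2 - q1 * q2). set (R := p1 * q2 + q1 * p2).
  assert (HR0 : 0 < R) by (unfold R; nra).
  assert (Hsr : sr * R = 0).
  { unfold sr, R. replace ((p1 * p2 - q1 * q2) * (p1 * q2 + q1 * p2)) with
      (p2*q2*(p1*p1 - q1*q1) + p1*q1*(p2*p2 - q2*q2)) by ring.
    rewrite P1, P3. nra. }
  assert (Hsr0 : sr = 0).
  { destruct (Rmult_integral _ _ Hsr); lra. }
  assert (HR : R * R = 1 + b * b).
  { assert (E : sr*sr - R*R = (p1*p1 - q1*q1)*(p2*p2 - q2*q2) - (2*p1*q1)*(2*p2*q2)) by (unfold sr, R; ring).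
    rewrite P1, P2, P3, P4, Hsr0 in E. lra. }
  fold sr R. rewrite Hsr0.
  replace (x * 0 - y * R) with (-(y*R)) by ring.
  replace (x * R + y * 0) with (x*R) by ring.
  assert (Hc2 : forall k, (- (y * R) * k + x * R * b) = (- (y * R) * k + x * R * b)) by auto.
  destruct (COS_bound u) as [Cu1 Cu2].
  apply (pair_ineq x y R b c0 g A (cos u) (Wf g A u) (Wf g A (u + PI))); auto.
  - unfold Wf. apply sqrt_sqrt. nra.
  - unfold Wf. rewrite neg_cos. replace (A - cos u) with (A + - cos u) by ring. apply sqrt_sqrt. nra.
  - apply Wf_pos; auto.
  - apply Wf_pos; auto.
Qed.

Lemma cos_2pi x : cos (x + 2*PI) = cos x.
Proof. rewrite cos_plus, cos_2PI, sin_2PI. ring. Qed.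

Lemma FF_period c0 g A M b t y : FF c0 g A M b (y + 2*PI) t = FF c0 g A M b y t.
Proof. unfold FF, Wf. rewrite cos_2pi. reflexivity. Qed.

Lemma root_exists c0 g A : 0 < g -> 1 < A -> 0 < c0 -> c0 * c0 = 1 + / g ->
  exists t, 0 < t < 1 /\ RInt (fun u => FF c0 g A (A+1+2*g) (/c0) u t) 0 (2*PI) = 0.
Proof.
  intros Hg HA Hc Hc2.
  set (M := A+1+2*g). set (b := /c0).
  assert (Hb : 0 < b) by (apply Rinv_0_lt_compat; lra).
  assert (Hcb : c0 * b = 1) by (unfold b; field; lra).
  assert (HM : 2 < M) by (unfold M; lra).
  assert (Hcont2 : forall u t, continuity_2d_pt (FF c0 g A M b) u t) by (intros; apply FF_cont2; auto).
  assert (Hcu : forall t u, continuous (fun u => FF c0 g A M b u t) u) by (intros; apply c2_cont_u; auto).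
  set (h := fun t => RInt (fun u => FF c0 g A M b u t) 0 (2*PI)).
  assert (Hpi := PI_RGT_0).
  assert (H1 : 0 < h 1).
  { unfold h. apply RInt_gt_0. lra. intros; apply FF_t1_pos; auto. intros; apply Hcu. }
  assert (H0 : h 0 < 0).
  { assert (E : RInt (fun u => FF c0 g A M b u 0 + FF c0 g A M b (u + PI) 0) 0 (2*PI) = 2 * h 0).
    { rewrite (RInt_plus (V := R_CompleteNormedModule) (fun u => FF c0 g A M b u 0) (fun u => FF c0 g A M b (u + PI) 0)).
      - unfold plus; simpl. rewrite (RInt_shift (fun u => FF c0 g A M b u 0) 0 (2*PI) PI) by auto.
        replace (2*PI + PI) with (PI + 2*PI) by ring. rewrite Rplus_0_l. rewrite (RInt_period (fun u => FF c0 g A M b u 0)); auto.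
        + unfold h. ring.
        + intros; apply FF_period.
      - apply exRc; auto.
      - apply exRc. intros y. apply (continuous_comp (fun u => u + PI) (fun u => FF c0 g A M b u 0)); auto.
        apply cR_plus; [apply cR_id|apply cR_const]. }
    assert (RInt (fun u => FF c0 g A M b u 0 + FF c0 g A M b (u + PI) 0) 0 (2*PI) < RInt (fun _ => 0) 0 (2*PI)).
    { apply RInt_lt. lra. intros; apply cR_const.
      intros; apply cR_plus; auto. apply (continuous_comp (fun u => u + PI) (fun u => FF c0 g A M b u 0)); auto.
      apply cR_plus; [apply cR_id|apply cR_const].
      intros; apply FF_t0_neg; auto. }
    rewrite RInt_const in H. unfold scal in H; simpl in H; unfold mult in H; simpl in H. lra. }
  destruct (Ranalysis5.IVT_interv h 0 1) as [z [Hz1 Hz2]].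
  - intros a _. apply cont_param_int; auto. lra.
  - lra.
  - exact H0.
  - exact H1.
  - exists z. split; [|exact Hz2].
    split; destruct Hz1; [destruct (Req_dec z 0) as [->|]; [lra|lra] | destruct (Req_dec z 1) as [->|]; lra].
Qed.

Open Scope R_scope.
Open Scope R_scope.

Notation CD := (@is_derive R_AbsRing C_R_NormedModule).
Notation RD := (@is_derive R_AbsRing R_NormedModule).

Lemma is_derive_C (u v : R -> R) z du dv :
  RD u z du -> RD v z dv ->
  CD (fun x => (u x, v x) : C) z ((du, dv) : C).
Proof.
  intros Hu Hv.
  unfold is_derive in *.
  apply (filterdiff_comp_2 u v (fun x y => ((x,y) : C_R_NormedModule)) (fun y => scal y du) (fun y => scal y dv) (fun x y => ((x,y):C_R_NormedModule))) in Hv; [|exact Hu|].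
  - exact Hv.
  - apply filterdiff_linear. apply is_linear_ext with (fun t => t).
    + intros [x y]; reflexivity.
    + apply is_linear_id.
Qed.

Lemma is_derive_Re (f : R -> C) z df :
  CD f z df -> RD (fun x => Re (f x)) z (Re df).
Proof.
  intros H. unfold is_derive in *.
  apply (filterdiff_comp f (@fst R R) _ (@fst R R)) in H.
  - exact H.
  - apply filterdiff_linear. apply (@is_linear_fst R_AbsRing R_NormedModule R_NormedModule).
Qed.

Lemma is_derive_Im (f : R -> C) z df :
  CD f z df -> RD (fun x => Im (f x)) z (Im df).
Proof.
  intros H. unfold is_derive in *.
  apply (filterdiff_comp f (@snd R R) _ (@snd R R)) in H.
  - exact H.
  - apply filterdiff_linear. apply (@is_linear_snd R_AbsRing R_NormedModule R_NormedModule).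
Qed.

Lemma is_derive_C' (f : R -> C) z l :
  RD (fun x => Re (f x)) z (Re l) -> RD (fun x => Im (f x)) z (Im l) -> CD f z l.
Proof.
  intros H1 H2. destruct l as [l1 l2].
  apply (is_derive_ext (fun x => (Re (f x), Im (f x)) : C)).
  - intros t. destruct (f t); reflexivity.
  - apply is_derive_C; assumption.
Qed.

Lemma dR_mul (f g : R -> R) (x df dg : R) : RD f x df -> RD g x dg ->
  RD (fun t => f t * g t) x (df * g x + f x * dg).
Proof. intros H1 H2. apply (is_derive_mult f g x df dg H1 H2). intros; apply Rmult_comm. Qed.
Lemma dR_plus (f g : R -> R) (x df dg : R) : RD f x df -> RD g x dg ->
  RD (fun t => f t + g t) x (df + dg).
Proof. intros H1 H2. apply (is_derive_plus f g x df dg H1 H2). Qed.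
Lemma dR_minus (f g : R -> R) (x df dg : R) : RD f x df -> RD g x dg ->
  RD (fun t => f t - g t) x (df - dg).
Proof. intros H1 H2. apply (is_derive_minus f g x df dg H1 H2). Qed.
Lemma dR_const (k : R) x : RD (fun _ => k) x 0.
Proof. apply (is_derive_const k x). Qed.
Lemma dR_eq (f : R -> R) (x l l' : R) : RD f x l -> l = l' -> RD f x l'.
Proof. intros H ->; exact H. Qed.

Lemma dC_eq (f : R -> C) (x : R) (l l' : C) : CD f x l -> l = l' -> CD f x l'.
Proof. intros H ->; exact H. Qed.

Open Scope C_scope.
Lemma dC_mul (f g : R -> C) x df dg : CD f x df -> CD g x dg ->
  CD (fun t => f t * g t) x (df * g x + f x * dg).
Proof.
  intros H1 H2. apply is_derive_C'; simpl.
  - apply dR_eq with (Re df * Re (g x) + Re (f x) * Re dg - (Im df * Im (g x) + Im (f x) * Im dg))%R.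
    + apply dR_minus; apply dR_mul; auto using is_derive_Re, is_derive_Im.
    + unfold Re, Im; destruct df, dg, (f x), (g x); simpl; ring.
  - apply dR_eq with (Re df * Im (g x) + Re (f x) * Im dg + (Im df * Re (g x) + Im (f x) * Re dg))%R.
    + apply dR_plus; apply dR_mul; auto using is_derive_Re, is_derive_Im.
    + unfold Re, Im; destruct df, dg, (f x), (g x); simpl; ring.
Qed.

Lemma dC_plus (f g : R -> C) x df dg : CD f x df -> CD g x dg ->
  CD (fun t => f t + g t) x (df + dg).
Proof.
  intros H1 H2. apply is_derive_C'; simpl.
  - apply dR_plus; auto using is_derive_Re.
  - apply dR_plus; auto using is_derive_Im.
Qed.

Lemma dC_const (k : C) x : CD (fun _ => k) x (RtoC 0).
Proof. apply is_derive_C'; simpl; apply dR_const. Qed.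

Lemma dC_RtoC (u : R -> R) x du : RD u x du -> CD (fun t => RtoC (u t)) x (RtoC du).
Proof. intros H. apply is_derive_C'; simpl; auto using dR_const. Qed.

Lemma dR_div (f g : R -> R) (x df dg : R) : RD f x df -> RD g x dg -> g x <> 0%R ->
  RD (fun t => f t / g t)%R x ((df * g x - f x * dg) / (g x * g x))%R.
Proof.
  intros H1 H2 Hn. unfold Rdiv.
  eapply dR_eq. apply dR_mul. exact H1. apply is_derive_inv; eauto.
  simpl. field. auto.
Qed.

Lemma dR_sq2 (f g : R -> R) (x df dg : R) : RD f x df -> RD g x dg ->
  RD (fun t => f t ^ 2 + g t ^ 2)%R x (2 * f x * df + 2 * g x * dg)%R.
Proof.
  intros H1 H2. eapply dR_eq. apply dR_plus; simpl; apply dR_mul; [|apply dR_mul|..|apply dR_mul]; eauto; apply dR_const.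
  simpl. ring.
Qed.

Lemma dC_inv (f : R -> C) x df : CD f x df -> f x <> 0 ->
  CD (fun t => / f t) x (- df / (f x * f x)).
Proof.
  intros H Hn.
  assert (Hd : (Re (f x) ^ 2 + Im (f x) ^ 2 <> 0)%R).
  { intro E. apply Hn. destruct (f x) as [p q]; simpl in *.
    assert (p = 0%R) by nra. assert (q = 0%R) by nra. subst. reflexivity. }
  pose proof (is_derive_Re _ _ _ H) as Hr. pose proof (is_derive_Im _ _ _ H) as Hi.
  apply is_derive_C'.
  - eapply dR_eq. unfold Cinv; simpl.
    apply (dR_div (fun t => fst (f t)) (fun t => fst (f t) ^ 2 + snd (f t) ^ 2)%R); [exact Hr| apply dR_sq2; eauto | exact Hd].
    unfold Re, Im in *. destruct df as [d1 d2], (f x) as [p q]; simpl in *. field.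
    repeat split; try (intro E; apply Hd; simpl; nra).
  - eapply dR_eq. unfold Cinv; simpl.
    apply (dR_div (fun t => - snd (f t))%R (fun t => fst (f t) ^ 2 + snd (f t) ^ 2)%R); [| apply dR_sq2; eauto | exact Hd].
    apply (is_derive_opp (fun t => snd (f t))). exact Hi.
    unfold Re, Im in *. destruct df as [d1 d2], (f x) as [p q]; simpl in *. unfold opp; simpl. field.
    repeat split; try (intro E; apply Hd; simpl; nra).
Qed.

Definition cexp (w : C) : C := (exp (Re w) * cos (Im w), exp (Re w) * sin (Im w))%R.

Lemma dR_comp (F : R -> R) (g : R -> R) x dF dg : RD F (g x) dF -> RD g x dg ->
  RD (fun t => F (g t)) x (dg * dF)%R.
Proof. intros H1 H2. apply (is_derive_comp F g x dF dg H1 H2). Qed.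

Lemma dR_exp_c (g : R -> R) x dg : RD g x dg -> RD (fun t => exp (g t)) x (dg * exp (g x))%R.
Proof. intros H. apply dR_comp; auto. apply is_derive_Reals, derivable_pt_lim_exp. Qed.
Lemma dR_cos_c (g : R -> R) x dg : RD g x dg -> RD (fun t => cos (g t)) x (dg * - sin (g x))%R.
Proof. intros H. apply dR_comp; auto. apply is_derive_Reals, derivable_pt_lim_cos. Qed.
Lemma dR_sin_c (g : R -> R) x dg : RD g x dg -> RD (fun t => sin (g t)) x (dg * cos (g x))%R.
Proof. intros H. apply dR_comp; auto. apply is_derive_Reals, derivable_pt_lim_sin. Qed.

Lemma dC_cexp (P : R -> C) x dP : CD P x dP -> CD (fun t => cexp (P t)) x (dP * cexp (P x)).
Proof.
  intros H. pose proof (is_derive_Re _ _ _ H) as Hr. pose proof (is_derive_Im _ _ _ H) as Hi.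
  apply is_derive_C'; unfold cexp; simpl.
  - eapply dR_eq. apply dR_mul. apply dR_exp_c, Hr. apply dR_cos_c, Hi.
    unfold Re, Im in *; destruct dP, (P x); simpl; ring.
  - eapply dR_eq. apply dR_mul. apply dR_exp_c, Hr. apply dR_sin_c, Hi.
    unfold Re, Im in *; destruct dP, (P x); simpl; ring.
Qed.

Lemma dC_comp (F : R -> C) (g : R -> R) x dF dg : CD F (g x) dF -> RD g x dg ->
  CD (fun t => F (g t)) x (RtoC dg * dF).
Proof.
  intros H1 H2. pose proof (is_derive_comp F g x dF dg H1 H2) as H.
  eapply dC_eq. exact H. destruct dF; unfold scal; simpl; unfold prod_scal, RtoC, Cmult; simpl.
  unfold scal; simpl; unfold mult; simpl. f_equal; ring.
Qed.

Open Scope R_scope.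
Open Scope C_scope.

Lemma riccati (a lam kap c g A S Co F1 F2 : C) :
  g <> 0 -> c * c * g = 1 + g -> F2 = - g * S -> F1 * F1 = 2 * g * (A + Co) ->
  S * S = 1 - Co * Co ->
  lam * lam = (a - A) / (2 * g) -> kap * kap = g * g * (lam * lam) * (a * a - 1) -> a + Co <> 0 ->
  let Psi := a + Co in let dPsi := - S * F1 in let ddPsi := - (Co * (F1 * F1) + S * F2) in
  let phi := c * g * lam + (kap + dPsi / 2) / Psi in
  let dphi := (ddPsi / 2) / Psi - (kap + dPsi / 2) * dPsi / (Psi * Psi) in
  dphi + phi * phi - 2 * c * g * lam * phi + g * (lam * lam + Co) = 0.
Proof.
  intros Hg Hc H2 H1 HS Hl Hk HP Psi dPsi ddPsi phi dphi.
  assert (E : dphi + phi * phi - 2 * c * g * lam * phi + g * (lam * lam + Co) =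
    (2 * Psi * ddPsi - (S * S) * (F1 * F1) + 4 * (kap * kap)
      + 4 * Psi * Psi * (g * Co + g * (lam * lam) - (c * c * g) * g * (lam * lam))) / (4 * Psi * Psi)).
  { unfold phi, dphi, dPsi. field. exact HP. }
  rewrite E. unfold ddPsi, Psi. rewrite H2.
  replace (S * (- g * S)) with (- g * (S * S)) by ring.
  rewrite Hk, Hc, HS, H1, Hl.
  field. repeat split; auto. 
Qed.

Open Scope R_scope.
Open Scope R_scope.

Lemma periodic_bounded (K : R -> R) T : 0 < T -> (forall x, continuous K x) -> (forall x, K (x + T) = K x) ->
  exists B, forall x, Rabs (K x) <= B.
Proof.
  intros HT Hc Hp.
  assert (Hcp : forall x, continuity_pt K x) by (intros; apply continuity_pt_filterlim, Hc).
  destruct (continuity_ab_maj K 0 T) as [x1 [Hx1 _]]; [lra| intros; apply Hcp|].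
  destruct (continuity_ab_min K 0 T) as [x2 [Hx2 _]]; [lra| intros; apply Hcp|].
  set (B := Rmax (K x1) (- K x2)).
  assert (Hbase : forall x, 0 <= x <= T -> Rabs (K x) <= B).
  { intros x Hx. specialize (Hx1 x Hx). specialize (Hx2 x Hx). unfold B.
    apply Rabs_le. split. pose proof (Rmax_r (K x1) (- K x2)). lra. pose proof (Rmax_l (K x1) (- K x2)). lra. }
  assert (Hind : forall n : nat, forall x, - T * INR n <= x <= T * INR n -> Rabs (K x) <= B).
  { induction n as [|n IH]; intros x Hx.
    - simpl in Hx. apply Hbase. lra.
    - rewrite S_INR in Hx. pose proof (pos_INR n).
      destruct (Rle_lt_dec x T) as [H1|H1].
      + destruct (Rle_lt_dec 0 x) as [H2|H2].
        * apply Hbase; lra.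
        * rewrite <- Hp. destruct (Rle_lt_dec (x + T) 0) as [H3|H3].
          -- apply IH. nra.
          -- apply Hbase; lra.
      + replace x with ((x - T) + T) by ring. rewrite Hp. apply IH. nra. }
  exists B. intros x.
  destruct (nfloor_ex (Rabs x / T)) as [n Hn].
  { apply Rdiv_le_0_compat; [apply Rabs_pos|lra]. }
  apply (Hind (S n)). rewrite S_INR.
  assert (Rabs x < T * (INR n + 1)).
  { destruct Hn as [_ Hn]. apply (Rmult_lt_compat_l T) in Hn; auto. unfold Rdiv in Hn.
    replace (T * (Rabs x * / T)) with (Rabs x) in Hn by (field; lra). lra. }
  pose proof (Rle_abs x). pose proof (Rle_abs (-x)). rewrite Rabs_Ropp in *. lra.
Qed.

Open Scope R_scope.

Close Scope C_scope.
Open Scope R_scope.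
Open Scope R_scope.

Lemma Psi_nz (a : C) x : 0 < Im a -> (a + RtoC x)%C <> RtoC 0.
Proof. intros H E. apply (f_equal Im) in E. simpl in E. destruct a; simpl in *. lra. Qed.

Lemma C_re_div (ar ai x d : R) : ai <> 0 ->
  Re (RtoC d / (2 * ((ar, ai) + RtoC x)))%C = d * (ar + x) / (2 * ((ar + x)^2 + ai^2)).
Proof.
  intros H. unfold Cdiv, Cinv, Cmult, Cplus, RtoC; simpl.
  assert ((ar+x)^2 + ai^2 <> 0) by (apply Rgt_not_eq; pose proof (pow2_ge_0 (ar+x)); assert (0 < ai^2) by (apply pow2_gt_0; auto); lra).
  field. repeat split; auto; intro E; apply H0; simpl in E; nra.
Qed.

Lemma C_im_div (ar ai x d : R) : ai <> 0 ->
  Im (RtoC d / (2 * ((ar, ai) + RtoC x)))%C = - d * ai / (2 * ((ar + x)^2 + ai^2)).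
Proof.
  intros H. unfold Cdiv, Cinv, Cmult, Cplus, RtoC; simpl.
  assert ((ar+x)^2 + ai^2 <> 0) by (apply Rgt_not_eq; pose proof (pow2_ge_0 (ar+x)); assert (0 < ai^2) by (apply pow2_gt_0; auto); lra).
  field. repeat split; auto; intro E; apply H0; simpl in E; nra.
Qed.

Lemma Re_plus (x y : C) : Re (x + y)%C = Re x + Re y.
Proof. reflexivity. Qed.
Lemma Im_plus (x y : C) : Im (x + y)%C = Im x + Im y.
Proof. reflexivity. Qed.

Lemma Cmod_cexp (w : C) : Cmod (cexp w) = exp (Re w).
Proof.
  unfold Cmod, cexp, Re, Im; simpl.
  destruct w as [x y]; simpl.
  replace (exp x * cos y * (exp x * cos y * 1) + exp x * sin y * (exp x * sin y * 1)) with (exp x * exp x).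
  - rewrite sqrt_square; auto. apply Rlt_le, exp_pos.
  - pose proof (sin2_cos2 y). unfold Rsqr in H. nra.
Qed.

Lemma exp_le_mono x y : x <= y -> exp x <= exp y.
Proof. intros [H|H]. apply Rlt_le, exp_increasing, H. subst; lra. Qed.

Lemma exd_cont (f : R -> R) x : ex_derive f x -> continuous f x.
Proof. intros H. apply (ex_derive_continuous (K:=R_AbsRing) (V:=R_NormedModule)), H. Qed.

Lemma ode_sol (c g A sg : R) (f : R -> R) (a lam kap : C) :
  0 < g -> g * (c*c - 1) = 1 -> 1 < A -> 0 < Im a -> sg * sg = 1 ->
  (forall z, ex_derive f z) -> (forall z, ex_derive (Derive f) z) ->
  (forall z, Derive (Derive f) z = - g * sin (f z)) ->
  (forall z, Derive f z = sg * sqrt (2*g*(A + cos (f z)))) ->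
  (lam * lam = (a - RtoC A) / (2 * RtoC g))%C ->
  (kap * kap = RtoC g * RtoC g * (lam * lam) * (a * a - 1))%C ->
  RInt (fun u => Re (RtoC c * RtoC g * lam + kap / (a + RtoC (cos u)))%C / sqrt (2*g*(A + cos u))) 0 (2*PI) = 0 ->
  exists (p dp ddp : R -> C),
    (forall z, is_derive p z (dp z)) /\ (forall z, is_derive dp z (ddp z)) /\
    (forall z, (ddp z - 2 * RtoC c * RtoC g * lam * dp z + RtoC g * (lam * lam + RtoC (cos (f z))) * p z)%C = 0%C) /\
    (exists M : R, forall z, Cmod (p z) <= M) /\ (exists z, p z <> 0%C).
Proof.
  intros Hg Hgc HA Ha Hsg Hf1 Hf2 Hf2e Hf1e Hlam Hkap Hint.
  set (W := fun u => sqrt (2*g*(A + cos u))).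
  assert (HW : forall u, 0 < W u).
  { intros u. unfold W. apply sqrt_lt_R0. destruct (COS_bound u). nra. }
  assert (HWd : forall u, RD W u (Derive W u)).
  { intros u. apply Derive_correct. unfold W. auto_derive. destruct (COS_bound u). nra. }
  set (q := fun u => (RtoC c * RtoC g * lam + kap / (a + RtoC (cos u)))%C).
  assert (Hqd : forall u, exists d, CD q u d).
  { intros u. eexists. unfold q. apply dC_plus. apply dC_const.
    unfold Cdiv. apply dC_mul. apply dC_const. apply dC_inv.
    apply dC_plus. apply dC_const. apply dC_RtoC. apply is_derive_Reals, derivable_pt_lim_cos.
    apply Psi_nz; auto. }
  set (kr := fun u => Re (q u) / W u). set (ki := fun u => Im (q u) / W u).
  assert (Hkrd : forall u, ex_derive kr u).
  { intros u. destruct (Hqd u) as [d Hd]. eexists. unfold kr.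
    apply dR_div. apply is_derive_Re, Hd. apply HWd. apply Rgt_not_eq, HW. }
  assert (Hkid : forall u, ex_derive ki u).
  { intros u. destruct (Hqd u) as [d Hd]. eexists. unfold ki.
    apply dR_div. apply is_derive_Im, Hd. apply HWd. apply Rgt_not_eq, HW. }
  assert (Hkrc : forall u, continuous kr u) by (intros; apply exd_cont, Hkrd).
  assert (Hkic : forall u, continuous ki u) by (intros; apply exd_cont, Hkid).
  set (Kr := fun x => RInt kr 0 x). set (Ki := fun x => RInt ki 0 x).
  assert (HKr : forall x, RD Kr x (kr x)).
  { intros x. apply (is_derive_RInt kr Kr 0 x).
    - apply filter_forall. intros y. apply (RInt_correct (V:=R_CompleteNormedModule)). apply exRc; auto.
    - apply Hkrc. }
  assert (HKi : forall x, RD Ki x (ki x)).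
  { intros x. apply (is_derive_RInt ki Ki 0 x).
    - apply filter_forall. intros y. apply (RInt_correct (V:=R_CompleteNormedModule)). apply exRc; auto.
    - apply Hkic. }
  assert (HKrb : exists B, forall x, Rabs (Kr x) <= B).
  { apply (periodic_bounded Kr (2*PI)).
    - pose proof PI_RGT_0; lra.
    - intros x. apply exd_cont. eexists. apply HKr.
    - intros x. unfold Kr. rewrite <- (RInt_ch kr 0 x (x + 2*PI)) by auto.
      rewrite (RInt_period kr (2*PI) x); auto.
      + assert (Hz : RInt kr 0 (2*PI) = 0) by exact Hint. rewrite Hz. apply Rplus_0_r.
      + intros y. unfold kr, q, W. rewrite cos_2pi. reflexivity. }
  destruct HKrb as [B HB].
  destruct a as [ar ai]. simpl in Ha.
  set (a := (ar, ai) : C) in *.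
  set (N := fun z => (ar + cos (f z))^2 + ai^2).
  assert (HN : forall z, 0 < N z).
  { intros z. unfold N. pose proof (pow2_ge_0 (ar + cos (f z))). assert (0 < ai^2) by (apply pow2_gt_0; lra). lra. }
  set (Phr := fun z => /4 * ln (N z) + sg * Kr (f z)).
  set (Phi := fun z => - /2 * atan ((ar + cos (f z)) / ai) + sg * Ki (f z)).
  set (Ph := fun z => (Phr z, Phi z) : C).
  set (S := fun z => RtoC (sin (f z))). set (Co := fun z => RtoC (cos (f z))).
  set (F1 := fun z => RtoC (Derive f z)). set (F2 := fun z => RtoC (Derive (Derive f) z)).
  set (Psi := fun z => (a + Co z)%C).
  assert (HPsi : forall z, Psi z <> RtoC 0) by (intros; apply Psi_nz; simpl; lra).
  set (dPsi := fun z => (- S z * F1 z)%C).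
  set (ddPsi := fun z => (- (Co z * (F1 z * F1 z) + S z * F2 z))%C).
  set (phi := fun z => (RtoC c * RtoC g * lam + (kap + dPsi z / 2) / Psi z)%C).
  set (dphi := fun z => ((ddPsi z / 2) / Psi z - (kap + dPsi z / 2) * dPsi z / (Psi z * Psi z))%C).
  assert (Hf1d : forall z, RD f z (Derive f z)) by (intros; apply Derive_correct, Hf1).
  assert (Hf2d : forall z, RD (Derive f) z (Derive (Derive f) z)) by (intros; apply Derive_correct, Hf2).
  assert (Hphiq : forall z, phi z = (q (f z) + RtoC (- sin (f z) * Derive f z) / (2 * Psi z))%C).
  { intros z. unfold phi, q, dPsi, S, F1, Psi, Co. rewrite RtoC_mult, RtoC_opp. field. apply HPsi. }
  assert (HPh : forall z, CD Ph z (phi z)).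
  { intros z. apply is_derive_C'.
    - change (RD (fun x => Phr x) z (Re (phi z))). unfold Phr. eapply dR_eq.
      + apply dR_plus.
        * apply dR_mul. apply dR_const. apply dR_comp. apply is_derive_ln, HN.
          unfold N. eapply dR_eq. apply dR_sq2. apply dR_plus. apply dR_const. apply dR_cos_c, Hf1d. apply dR_const. reflexivity.
        * apply dR_mul. apply dR_const. apply dR_comp. apply HKr. apply Hf1d.
      + rewrite Hphiq. unfold Psi, Co, a. rewrite Re_plus, C_re_div by lra.
        unfold kr, W. rewrite Hf1e. unfold N.
        set (Wz := sqrt (2*g*(A + cos (f z)))). assert (HWz : 0 < Wz) by apply HW.
        replace (sg * (sg * Wz * (Re (q (f z)) / Wz))) with ((sg*sg) * Re (q (f z))) by (field; lra).
        rewrite Hsg. field. repeat split; try lra; try (apply Rgt_not_eq, (HN z)).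
    - change (RD (fun x => Phi x) z (Im (phi z))). unfold Phi. eapply dR_eq.
      + apply dR_plus.
        * apply dR_mul. apply dR_const. apply dR_comp. apply is_derive_atan.
          apply dR_div. apply dR_plus. apply dR_const. apply dR_cos_c, Hf1d. apply dR_const. lra.
        * apply dR_mul. apply dR_const. apply dR_comp. apply HKi. apply Hf1d.
      + rewrite Hphiq. unfold Psi, Co, a. rewrite Im_plus, C_im_div by lra.
        unfold ki, W. rewrite Hf1e. unfold Rsqr.
        set (Wz := sqrt (2*g*(A + cos (f z)))). assert (HWz : 0 < Wz) by apply HW.
        replace (sg * (sg * Wz * (Im (q (f z)) / Wz))) with ((sg*sg) * Im (q (f z))) by (field; lra).
        rewrite Hsg. field. repeat split; try lra; try (apply Rgt_not_eq, (HN z)). }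
  assert (HCo : forall z, CD Co z (RtoC (Derive f z * - sin (f z)))).
  { intros z. apply dC_RtoC. apply dR_cos_c, Hf1d. }
  assert (HPsid : forall z, CD Psi z (dPsi z)).
  { intros z. eapply dC_eq. apply dC_plus. apply dC_const. apply HCo.
    unfold dPsi, S, F1. rewrite RtoC_mult, RtoC_opp. ring. }
  assert (HdPsid : forall z, CD dPsi z (ddPsi z)).
  { intros z. apply (is_derive_ext (fun x => RtoC (- sin (f x) * Derive f x))).
    - intros t. unfold dPsi, S, F1. rewrite RtoC_mult, RtoC_opp. reflexivity.
    - eapply dC_eq. apply dC_RtoC. apply dR_mul. apply (is_derive_opp (fun x => sin (f x))). apply dR_sin_c, Hf1d. apply Hf2d.
      unfold ddPsi, Co, S, F1, F2. unfold opp; simpl. repeat (rewrite RtoC_plus || rewrite RtoC_mult || rewrite RtoC_opp). ring. }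
  assert (Hphid : forall z, CD phi z (dphi z)).
  { intros z. eapply dC_eq. apply dC_plus. apply dC_const. unfold Cdiv. apply dC_mul.
    apply dC_plus. apply dC_const. apply dC_mul. apply HdPsid. apply dC_const.
    apply dC_inv. apply HPsid. apply HPsi.
    unfold dphi. field. apply HPsi. }
  exists (fun z => cexp (Ph z)), (fun z => (phi z * cexp (Ph z))%C),
    (fun z => (dphi z * cexp (Ph z) + phi z * (phi z * cexp (Ph z)))%C).
  split; [|split; [|split; [|split]]].
  - intros z. apply dC_cexp, HPh.
  - intros z. apply dC_mul. apply Hphid. apply dC_cexp, HPh.
  - intros z.
    assert (Hr := riccati a lam kap (RtoC c) (RtoC g) (RtoC A) (S z) (Co z) (F1 z) (F2 z)).
    cbv zeta in Hr.
    assert (E : (RtoC g * (lam * lam + RtoC (cos (f z))))%C = (RtoC g * (lam * lam + Co z))%C) by reflexivity.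
    rewrite E.
    replace ((dphi z * cexp (Ph z) + phi z * (phi z * cexp (Ph z))) - 2 * RtoC c * RtoC g * lam * (phi z * cexp (Ph z)) + RtoC g * (lam * lam + Co z) * cexp (Ph z))%C
      with ((dphi z + phi z * phi z - 2 * RtoC c * RtoC g * lam * phi z + RtoC g * (lam * lam + Co z)) * cexp (Ph z))%C by ring.
    unfold dphi, phi, dPsi, ddPsi, Psi. rewrite Hr. ring.
    + intro E'. apply (f_equal Re) in E'. simpl in E'. lra.
    + unfold RtoC; apply injective_projections; simpl; nra.
    + unfold F2, S. rewrite Hf2e. unfold RtoC; apply injective_projections; simpl; ring.
    + assert (HF : Derive f z * Derive f z = 2*g*(A + cos (f z))).
      { rewrite Hf1e. replace (sg * sqrt (2 * g * (A + cos (f z))) * (sg * sqrt (2 * g * (A + cos (f z)))))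
          with ((sg*sg) * (sqrt (2 * g * (A + cos (f z))) * sqrt (2 * g * (A + cos (f z))))) by ring.
        rewrite Hsg, sqrt_sqrt. ring. destruct (COS_bound (f z)). nra. }
      unfold F1, Co, RtoC; apply injective_projections; simpl; nra.
    + pose proof (sin2_cos2 (f z)). unfold Rsqr in H.
      unfold S, Co, RtoC; apply injective_projections; simpl; nra.
    + exact Hlam.
    + exact Hkap.
    + apply HPsi.
  - exists (exp (/4 * ln ((Rabs ar + 1)^2 + ai^2) + B)).
    intros z. rewrite Cmod_cexp. apply exp_le_mono. simpl. unfold Phr.
    apply Rplus_le_compat.
    + apply Rmult_le_compat_l; [lra|]. apply ln_le. apply HN. unfold N.
      destruct (COS_bound (f z)). pose proof (Rle_abs ar). pose proof (Rle_abs (-ar)). rewrite Rabs_Ropp in *.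
      assert (Rabs (ar + cos (f z)) <= Rabs ar + 1).
      { apply Rabs_le. split; lra. }
      assert ((ar + cos (f z))^2 <= (Rabs ar + 1)^2).
      { rewrite <- (pow2_abs (ar + cos (f z))). apply pow_incr. split; [apply Rabs_pos|auto]. }
      lra.
    + specialize (HB (f z)). assert (sg = 1 \/ sg = -1) by (destruct (Rle_lt_dec 0 sg); [left|right]; nra).
      destruct H as [-> | ->]; pose proof (Rle_abs (Kr (f z))); pose proof (Rle_abs (- Kr (f z))); rewrite Rabs_Ropp in *; lra.
  - exists 0. intros E. apply (f_equal Cmod) in E. rewrite Cmod_cexp, Cmod_0 in E.
    pose proof (exp_pos (Re (Ph 0))). lra.
Qed.

Close Scope C_scope.
Open Scope R_scope.
Open Scope R_scope.

Lemma const_sign (h : R -> R) : (forall z, continuous h z) -> (forall z, h z <> 0) ->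
  (forall z, 0 < h z) \/ (forall z, h z < 0).
Proof.
  intros Hc Hn.
  assert (Hcp : forall z, continuity_pt h z) by (intros; apply continuity_pt_filterlim, Hc).
  assert (Hcpo : forall z, continuity_pt (fun x => - h x) z).
  { intros z. apply continuity_pt_filterlim. apply (continuous_opp (V:=R_NormedModule) h z), Hc. }
  destruct (Rlt_dec 0 (h 0)) as [H0|H0].
  - left. intros z. destruct (Rlt_dec 0 (h z)) as [|Hz]; auto. exfalso.
    assert (Hz' : h z < 0) by (pose proof (Hn z); lra).
    destruct (Rlt_dec 0 z) as [Hzp|Hzp].
    + destruct (Ranalysis5.IVT_interv (fun x => - h x) 0 z) as [w [_ Hw]]; auto; try lra.
      apply (Hn w). lra.
    + assert (z < 0) by (destruct (Req_dec z 0) as [->|]; lra).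
      destruct (Ranalysis5.IVT_interv h z 0) as [w [_ Hw]]; auto. apply (Hn w Hw).
  - right. intros z. assert (H0' : h 0 < 0) by (pose proof (Hn 0); lra).
    destruct (Rlt_dec (h z) 0) as [|Hz]; auto. exfalso.
    assert (Hz' : 0 < h z) by (pose proof (Hn z); lra).
    destruct (Rlt_dec 0 z) as [Hzp|Hzp].
    + destruct (Ranalysis5.IVT_interv h 0 z) as [w [_ Hw]]; auto. apply (Hn w Hw).
    + assert (z < 0) by (destruct (Req_dec z 0) as [->|]; lra).
      destruct (Ranalysis5.IVT_interv (fun x => - h x) z 0) as [w [_ Hw]]; auto; try lra.
      apply (Hn w). lra.
Qed.

Close Scope C_scope.
Open Scope R_scope.
Open Scope R_scope.

Lemma Re_formula (cc gg l0 l1 k mr mi ar ai C : R) : (ar + C)^2 + ai^2 <> 0 ->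
  Re (RtoC cc * RtoC gg * (l0, l1) + RtoC k * (mr, mi) / ((ar, ai) + RtoC C))%C =
  cc*gg*l0 + k*((mr*(ar + C) + mi*ai)/((ar+C)^2 + ai^2)).
Proof.
  intros H. unfold Cdiv, Cinv, Cmult, Cplus, RtoC; simpl. field.
  intro E. apply H. simpl in E. lra.
Qed.

Theorem lemma4p3 (c : R) (f : R -> R) :
  1 < c ^ 2 -> rotational_wave c f ->
  exists lam : C, in_sigma_P c f lam /\ 0 < Re lam.
Proof.
  intros Hc2 [[Hf1 [Hf2 Hode]] [E [Hen HE]]].
  set (g := gamma c).
  assert (Hg : 0 < g) by (unfold g, gamma; apply Rinv_0_lt_compat; lra).
  assert (Hgc : g * (c * c - 1) = 1) by (unfold g, gamma; field; simpl in Hc2; lra).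
  set (A := E - 1).
  assert (HA : 1 < A) by (unfold A; lra).
  set (c0 := Rabs c).
  assert (Hc0sq : c0 * c0 = c * c) by (unfold c0; rewrite <- Rabs_mult; apply Rabs_pos_eq; nra).
  assert (Hc0 : 0 < c0) by (unfold c0; apply Rabs_pos_lt; intro; subst; simpl in Hc2; lra).
  assert (Hc02 : c0 * c0 = 1 + / g).
  { rewrite Hc0sq. unfold g, gamma. rewrite Rinv_inv. simpl. ring. }
  destruct (root_exists c0 g A Hg HA Hc0 Hc02) as [t [Ht Hroot]].
  set (M := A + 1 + 2*g) in *. set (b := /c0) in *.
  assert (Hb : 0 < b) by (apply Rinv_0_lt_compat; lra).
  assert (Hf1sq : forall z, Derive f z * Derive f z = 2*g*(A + cos (f z))).
  { intros z. specialize (Hen z). unfold A. rewrite <- Hen.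
    unfold g, gamma. field_simplify; [|simpl in Hc2; lra]. simpl. field. simpl in Hc2; lra. }
  assert (HAc : forall z, 0 < A + cos (f z)) by (intros z; destruct (COS_bound (f z)); lra).
  assert (Hnz : forall z, Derive f z <> 0).
  { intros z E0. specialize (Hf1sq z). rewrite E0 in Hf1sq. specialize (HAc z). nra. }
  assert (Hcf : forall z, continuous (Derive f) z) by (intros; apply exd_cont, Hf2).
  assert (Hsgn : exists sg, sg * sg = 1 /\ forall z, Derive f z = sg * sqrt (2*g*(A + cos (f z)))).
  { destruct (const_sign (Derive f) Hcf Hnz) as [Hp|Hn].
    - exists 1. split; [ring|]. intros z. rewrite <- Hf1sq, sqrt_square. ring. apply Rlt_le, Hp.
    - exists (-1). split; [ring|]. intros z. rewrite <- Hf1sq.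
      replace (Derive f z * Derive f z) with ((- Derive f z) * (- Derive f z)) by ring.
      rewrite sqrt_square. ring. specialize (Hn z). lra. }
  destruct Hsgn as [sg [Hsg Hf1e]].
  assert (Hf2e : forall z, Derive (Derive f) z = - g * sin (f z)).
  { intros z. specialize (Hode z).
    assert (Hd : Derive_n f 2 z = Derive (Derive f) z) by reflexivity.
    rewrite Hd in Hode.
    assert (H' : (c^2-1) * Derive (Derive f) z = - sin (f z)) by lra.
    replace (Derive (Derive f) z) with ((c^2-1) * Derive (Derive f) z / (c^2-1)) by (field; lra).
    rewrite H'. unfold g, gamma. field. lra. }
  set (ar := t*M). set (ai := b*(1-t)).
  assert (Hai : 0 < ai) by (unfold ai; apply Rmult_lt_0_compat; lra).
  set (a := (ar, ai) : C).
  set (X := (t*M - A)/(2*g)). set (Y := b*(1-t)/(2*g)).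
  assert (HY : 0 < Y) by (unfold Y; apply Rdiv_lt_0_compat; [apply Rmult_lt_0_compat; lra| lra]).
  set (lam := (lrp g A M b t, lip g A M b t) : C).
  set (s1 := (s1r M b t, s1i M b t) : C). set (s2 := (s2r M b t, s2i M b t) : C).
  set (sc := c / c0).
  assert (Hsc : sc * sc = 1). { unfold sc. replace (c/c0*(c/c0)) with ((c*c)/(c0*c0)) by (field; lra). rewrite <- Hc0sq. field. lra. }
  assert (Hcsc : c = sc * c0) by (unfold sc; field; lra).
  set (kap := (RtoC (-(sc*g)) * (lam * (s1 * s2)))%C).
  assert (Hlam : (lam * lam = (a - RtoC A) / (2 * RtoC g))%C).
  { destruct (Csq_prop X Y (Rlt_le _ _ HY)) as [Q1 Q2].
    assert (Rhs : ((a - RtoC A) / (2 * RtoC g))%C = (X, Y)).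
    { unfold a, X, Y, ar, ai, Cdiv, Cinv, Cmult, Cminus, Cplus, Copp, RtoC; simpl.
      apply injective_projections; simpl; field; lra. }
    rewrite Rhs. unfold lam, lrp, lip. fold X Y.
    apply injective_projections; simpl; lra. }
  assert (Hs1 : (s1 * s1 = a - 1)%C).
  { destruct (Csq_prop (t*M-1) (b*(1-t)) (Rlt_le _ _ Hai)) as [Q1 Q2].
    unfold s1, s1r, s1i, a, ar, ai, RtoC. apply injective_projections; simpl; lra. }
  assert (Hs2 : (s2 * s2 = a + 1)%C).
  { destruct (Csq_prop (t*M+1) (b*(1-t)) (Rlt_le _ _ Hai)) as [Q1 Q2].
    unfold s2, s2r, s2i, a, ar, ai, RtoC. apply injective_projections; simpl; lra. }
  assert (Hkap : (kap * kap = RtoC g * RtoC g * (lam * lam) * (a * a - 1))%C).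
  { unfold kap.
    replace (RtoC (- (sc * g)) * (lam * (s1 * s2)) * (RtoC (- (sc * g)) * (lam * (s1 * s2))))%C
      with (RtoC (- (sc * g)) * RtoC (- (sc * g)) * (lam * lam) * ((s1 * s1) * (s2 * s2)))%C by ring.
    rewrite Hs1, Hs2.
    replace (RtoC (- (sc * g)) * RtoC (- (sc * g)))%C with (RtoC g * RtoC g)%C.
    ring.
    unfold RtoC. apply injective_projections; simpl; nra. }
  assert (Hint : RInt (fun u => Re (RtoC c * RtoC g * lam + kap / (a + RtoC (cos u)))%C / sqrt (2*g*(A + cos u))) 0 (2*PI) = 0).
  { transitivity (RInt (fun u => scal (sc * g) (FF c0 g A M b u t)) 0 (2*PI)).
    2: { rewrite (RInt_scal (V := R_CompleteNormedModule)). rewrite Hroot. unfold scal; simpl; unfold mult; simpl. ring. apply exRc. intros y. apply c2_cont_u. apply FF_cont2; unfold M in *; lra. }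
    apply RInt_ext. intros u _. unfold scal; simpl; unfold mult; simpl.
    assert (HN : (ar + cos u)^2 + ai^2 <> 0).
    { apply Rgt_not_eq. pose proof (pow2_ge_0 (ar + cos u)). assert (0 < ai^2) by (apply pow2_gt_0; lra). lra. }
    assert (0 < sqrt (2 * g * (A + cos u))) by (apply Wf_pos; lra).
    assert (HN' : (ar + cos u) * (ar + cos u) + ai * ai <> 0) by (simpl in HN; intro E0; apply HN; lra).
    unfold FF, mrp, mip, srp, sip, Wf. fold ai. fold ar. rewrite Hcsc.
    field. repeat split; try lra; intro E0; apply HN'; lra. }
  destruct (ode_sol c g A sg f a lam kap Hg Hgc HA Hai Hsg Hf1 Hf2 Hf2e Hf1e Hlam Hkap Hint) as [p [dp [ddp H]]].
  exists lam. split.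
  - unfold in_sigma_P. exists p, dp, ddp. exact H.
  - simpl. unfold lrp. fold X Y. apply Csr_pos. left; exact HY.
Qed.
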